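(* (1) For $\mathcal{T}\in\mathbb{T}_k$, $\mathcal{T}'\in\mathbb{T}_l$, $$R_{\mathcal{T}}.R_{\mathcal{T}'}=\sum_{\substack{\mathcal{T}''\in\mathbb{T}_{k+l}\\ \mathcal{T}''_{\mid[k]}=\mathcal{T},\ \mathrm{Std}(\mathcal{T}''_{\mid[k+l]\setminus[k]})=\mathcal{T}'}}R_{\mathcal{T}''}.$$ (2) For $\mathcal{T}\in\mathbb{T}_k$, $\mathcal{T}'\in\mathbb{T}_l$, $$R_{\mathcal{T}}\downarrow R_{\mathcal{T}'}=\sum_{\substack{\mathcal{T}''\in\mathbb{T}_{k+l}\\ \mathcal{T}''_{\mid[k]}=\mathcal{T},\ \mathrm{Std}(\mathcal{T}''_{\mid[k+l]\setminus[k]})=\mathcal{T}',\\ [k]\leq_{\mathcal{T}''}[k+l]\setminus[k]}}R_{\mathcal{T}''}.$$ (3) For $\mathcal{T}\in\mathbb{T}_n$, $$\Delta(R_{\mathcal{T}})=\sum_{\substack{O\in\mathcal{T}\\ [n]\setminus O<_{\mathcal{T}}O}}R_{\mathrm{Std}(\mathcal{T}_{\mid[n]\setminus O})}\otimes R_{\mathrm{Std}(\mathcal{T}_{\mid O})}.$$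
   Context: Let $K$ be a field. For $n\geq0$, $[n]=\{1,\ldots,n\}$, $\mathbb{T}_n$ is the set of topologies on $[n]$, $\mathcal{H}_{\mathbb{T}}$ the $K$-vector space with basis $\bigsqcup_n\mathbb{T}_n$. For a topology $\mathcal{T}$ on finite $X$: $i\leq_{\mathcal{T}}j$ iff every open set containing $i$ contains $j$; $i<_{\mathcal{T}}j$ iff $i\leq_{\mathcal{T}}j$ and not $j\leq_{\mathcal{T}}i$. For $I,J\subseteq X$, $I\leq_{\mathcal{T}}J$ means $i\leq_{\mathcal{T}}j$ for all $i\in I,j\in J$, and $I<_{\mathcal{T}}J$ means $i<_{\mathcal{T}}j$ for all $i\in I,j\in J$ (vacuous if $I$ or $J$ is empty). For $Y\subseteq X$, $\mathcal{T}_{\mid Y}=\{O\cap Y\mid O\in\mathcal{T}\}$; if $X$ is totally ordered of size $m$, $\mathrm{Std}(\mathcal{T})\in\mathbb{T}_m$ is the transport along the increasing bijection $X\to[m]$. For $O\subseteq\mathbb{N}$, $O(+n)=\{k+n\mid k\in O\}$. Bilinear products: for $\mathcal{T}\in\mathbb{T}_n,\mathcal{T}'\in\mathbb{T}_{n'}$, $\mathcal{T}.\mathcal{T}'$ is the topology on $[n+n']$ with open sets $O\sqcup O'(+n)$, and $\mathcal{T}\downarrow\mathcal{T}'$ the topology with open sets $O\sqcup[n'](+n)$ and $O'(+n)$ ($O\in\mathcal{T},O'\in\mathcal{T}'$). Coproduct $\Delta(\mathcal{T})=\sum_{O\in\mathcal{T}}\mathrm{Std}(\mathcal{T}_{\mid[n]\setminus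 O})\otimes\mathrm{Std}(\mathcal{T}_{\mid O})$. $\mathbb{T}_n$ is partially ordered by refinement: $\mathcal{T}\leq\mathcal{T}'$ iff every open set of $\mathcal{T}$ is an open set of $\mathcal{T}'$. The ribbon basis $(R_{\mathcal{T}})$ of $\mathcal{H}_{\mathbb{T}}$ is defined by $\mathcal{T}=\sum_{\mathcal{T}'\in\mathbb{T}_n,\ \mathcal{T}'\leq\mathcal{T}}R_{\mathcal{T}'}$ for all $\mathcal{T}\in\mathbb{T}_n$, $n\geq0$ (equivalently via Möbius inversion). *)

(* Defs.v *)
From HB Require Import structures.
From mathcomp Require Import all_boot all_order all_algebra.
Set Implicit Arguments. Unset Strict Implicit. Unset Printing Implicit Defensive.
Import GRing.Theory.
Local Open Scope ring_scope.

(* A topology on [n] = 'I_n (0-based), given by its set of open sets. *)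
Definition is_topology n (T : {set {set 'I_n}}) : bool :=
  [&& set0 \in T, setT \in T &
      [forall O1 in T, forall O2 in T, (O1 :|: O2 \in T) && (O1 :&: O2 \in T)]].

Definition topo n := {T : {set {set 'I_n}} | is_topology T}.
Definition opens n (T : topo n) : {set {set 'I_n}} := val T.

Definition tle n (T : topo n) (i j : 'I_n) : bool :=
  [forall O in opens T, (i \in O) ==> (j \in O)].
Definition tlt n (T : topo n) (i j : 'I_n) : bool := tle T i j && ~~ tle T j i.
Definition setle n (T : topo n) (I J : {set 'I_n}) : bool :=
  [forall i in I, forall j in J, tle T i j].
Definition setlt n (T : topo n) (I J : {set 'I_n}) : bool :=
  [forall i in I, forall j in J, tlt T i j].

Definition refines n (T T' : topo n) : bool := opens T \subset opens T'.

(* is_std T Y B  <=>  Std(T_|Y) = B, i.e. B is the transport of the restricted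
   topology T_|Y = {O :&: Y | O in T} along the increasing bijection f : [m] -> Y. *)
Definition is_std n m (T : topo n) (Y : {set 'I_n}) (B : topo m) : bool :=
  [exists f : {ffun 'I_m -> 'I_n},
    [&& [forall i : 'I_m, forall j : 'I_m, (i < j)%N ==> (f i < f j)%N],
        f @: setT == Y &
        opens B == [set f @^-1: (O :&: Y) | O : {set 'I_n} in opens T]]].

(* Homogeneous component of degree n of H_T: K-linear combinations of T_n. *)
Notation Hdeg K n := {ffun topo n -> K}.

Definition basis (K : fieldType) n (T : topo n) : Hdeg K n :=
  [ffun X => (X == T)%:R].

Definition concat_opens k l (T : topo k) (T' : topo l) : {set {set 'I_(k + l)}} :=
  [set (lshift l @: O) :|: (@rshift k l @: O') | O : {set 'I_k} in opens T, O' : {set 'I_l} in opens T'].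
Definition down_opens k l (T : topo k) (T' : topo l) : {set {set 'I_(k + l)}} :=
  [set (lshift l @: O) :|: (@rshift k l @: setT) | O : {set 'I_k} in opens T]
  :|: [set @rshift k l @: O' | O' : {set 'I_l} in opens T'].

Definition mulH (K : fieldType) k l (f : Hdeg K k) (g : Hdeg K l) : Hdeg K (k + l) :=
  [ffun X => \sum_(T : topo k) \sum_(T' : topo l)
              (opens X == concat_opens T T')%:R * f T * g T'].
Definition downH (K : fieldType) k l (f : Hdeg K k) (g : Hdeg K l) : Hdeg K (k + l) :=
  [ffun X => \sum_(T : topo k) \sum_(T' : topo l)
              (opens X == down_opens T T')%:R * f T * g T'].

(* Linear extension of the coproduct.  An element of H_T (x) H_T is represented by
   its coefficients on the basis A (x) B, A : topo i, B : topo j. *)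
Definition coprodH (K : fieldType) n (f : Hdeg K n) (i j : nat) : {ffun topo i * topo j -> K} :=
  [ffun AB => \sum_(T : topo n) f T *
      (#|[set O in opens T | is_std T (~: O) AB.1 && is_std T O AB.2]|)%:R].

Definition tensH (K : fieldType) i j (f : Hdeg K i) (g : Hdeg K j) : {ffun topo i * topo j -> K} :=
  [ffun AB => f AB.1 * g AB.2].

(* Main.v *)
Require Import Defs.
From HB Require Import structures.
From mathcomp Require Import all_boot all_order all_algebra zify.
Import GRing.Theory.
Local Open Scope ring_scope.

Module Helpers.
Set Implicit Arguments. Unset Strict Implicit. Unset Printing Implicit Defensive.

Definition incr m n (f : 'I_m -> 'I_n) := forall i j : 'I_m, (i < j)%N -> (f i < f j)%N.

Lemma incr_inj m n (f : 'I_m -> 'I_n) : incr f -> injective f.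
Proof.
move=> hf i j E; apply/eqP; case: (ltngtP i j) => // [lt|lt|/val_inj -> //].
  by have := hf _ _ lt; rewrite E ltnn.
by have := hf _ _ lt; rewrite E ltnn.
Qed.

Lemma incr_le m n (f : 'I_m -> 'I_n) : incr f -> forall i j : 'I_m, (i <= j)%N -> (f i <= f j)%N.
Proof.
move=> hf i j; rewrite leq_eqVlt => /orP [/eqP/val_inj -> //|lt].
exact: ltnW (hf _ _ lt).
Qed.

Lemma incr_uniq m n (f g : 'I_m -> 'I_n) :
  incr f -> incr g -> f @: setT = g @: setT -> f =1 g.
Proof.
move=> hf hg E.
suff H : forall k (i : 'I_m), (i < k)%N -> f i = g i by move=> i; apply: (H i.+1).
elim=> [//|k IH] i; rewrite ltnS leq_eqVlt => /orP [/eqP Ei|]; last exact: IH.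
have : f i \in g @: setT by rewrite -E imset_f ?inE.
case/imsetP => p _ Ep.
have : g i \in f @: setT by rewrite E imset_f ?inE.
case/imsetP => q _ Eq.
have hp : (i <= p)%N.
  rewrite leqNgt; apply/negP => lt.
  have := IH p; rewrite -Ei => /(_ lt) Hp.
  have : f i = f p by rewrite Ep Hp.
  by move/(incr_inj hf) => eip; move: lt; rewrite eip ltnn.
have hq : (i <= q)%N.
  rewrite leqNgt; apply/negP => lt.
  have := IH q; rewrite -Ei => /(_ lt) Hq.
  have : g i = g q by rewrite Eq Hq.
  by move/(incr_inj hg) => eip; move: lt; rewrite eip ltnn.
apply/val_inj/eqP; rewrite eqn_leq.
have := incr_le hg hp; rewrite -Ep => ->.
by have := incr_le hf hq; rewrite -Eq => ->.
Qed.

Lemma enum_ord_filter n (Y : {set 'I_n}) : enum Y = [seq x <- enum 'I_n | x \in Y].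
Proof. by rewrite {1}/enum_mem -enumT. Qed.

Lemma incr_ex n (Y : {set 'I_n}) m : #|Y| = m -> exists2 f : 'I_m -> 'I_n, incr f & f @: setT = Y.
Proof.
move=> <-.
exists (fun i => @enum_val _ (mem Y) i).
  move=> i j lt; rewrite (enum_val_nth (enum_val i) i) (enum_val_nth (enum_val i) j).
  have srt : sorted (fun a b : 'I_n => (a < b)%N) (enum Y).
    rewrite enum_ord_filter; apply: sorted_filter; first by move=> a b c; apply: ltn_trans.
    by have := iota_ltn_sorted 0 n; rewrite -val_enum_ord sorted_map.
  apply: (sorted_ltn_nth (leT := fun a b : 'I_n => (a < b)%N)) => //.
  - by move=> a b c; apply: ltn_trans.
  - by rewrite inE -cardE.
  - by rewrite inE -cardE.
apply/setP => y; apply/imsetP/idP => [[i _ ->]|yY]; first exact: enum_valP.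
by exists (enum_rank_in yY y); rewrite ?inE // enum_rankK_in.
Qed.


Section Topo.
Variable n : nat.
Variable T : topo n.
Lemma top0 : set0 \in opens T. Proof. by have /and3P [] := valP T. Qed.
Lemma topT : setT \in opens T. Proof. by have /and3P [] := valP T. Qed.
Lemma topU A B : A \in opens T -> B \in opens T -> A :|: B \in opens T.
Proof. move=> hA hB; have /and3P [_ _ /forall_inP H] := valP T.
by have /forall_inP/(_ B hB)/andP[] := H A hA. Qed.
Lemma topI A B : A \in opens T -> B \in opens T -> A :&: B \in opens T.
Proof. move=> hA hB; have /and3P [_ _ /forall_inP H] := valP T.
by have /forall_inP/(_ B hB)/andP[] := H A hA. Qed.
End Topo.

Lemma topP n (X : {set {set 'I_n}}) :
  set0 \in X -> setT \in X -> (forall A B, A \in X -> B \in X -> (A :|: B \in X) && (A :&: B \in X)) ->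
  is_topology X.
Proof.
move=> h0 hT hUI; rewrite /is_topology h0 hT /=.
by apply/forall_inP => A hA; apply/forall_inP => B hB; apply: hUI.
Qed.

Lemma topo_eq n (A B : topo n) : opens A = opens B -> A = B.
Proof. exact: val_inj. Qed.

Definition pre_opens n m (f : 'I_m -> 'I_n) (T : topo n) : {set {set 'I_m}} :=
  [set f @^-1: V | V : {set 'I_n} in opens T].

Lemma pre_top n m (f : 'I_m -> 'I_n) (T : topo n) : is_topology (pre_opens f T).
Proof.
apply: topP.
- by apply/imsetP; exists set0; [exact: top0 | rewrite preimset0].
- by apply/imsetP; exists setT; [exact: topT | rewrite preimsetT].
rewrite /pre_opens => A B /imsetP [V hV ->] /imsetP [W hW ->]; apply/andP; split; apply/imsetP.
  by exists (V :|: W); [exact: topU | rewrite preimsetU].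
by exists (V :&: W); [exact: topI | rewrite preimsetI].
Qed.

Definition pre n m (f : 'I_m -> 'I_n) (T : topo n) : topo m :=
  exist _ (pre_opens f T) (pre_top f T).

Lemma opens_pre n m (f : 'I_m -> 'I_n) (T : topo n) : opens (pre f T) = pre_opens f T.
Proof. by []. Qed.

Lemma preI_im n m (f : 'I_m -> 'I_n) Y V : f @: setT = Y -> f @^-1: (V :&: Y) = f @^-1: V.
Proof.
move=> <-; apply/setP => x; rewrite !inE andbC.
by rewrite imset_f ?inE.
Qed.

Lemma std_iff n m (T : topo n) Y (B : topo m) (f : 'I_m -> 'I_n) :
  incr f -> f @: setT = Y -> is_std T Y B = (B == pre f T).
Proof.
move=> hf hY; apply/idP/idP.
  case/existsP => g /and3P [/forallP hg /eqP gY /eqP oB].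
  have hg' : incr g by move=> i j lt; have := forallP (hg i) j; rewrite lt.
  have fg : f =1 g.
    apply: incr_uniq => //; rewrite hY -gY; apply: eq_imset => x //.
  apply/eqP/topo_eq; rewrite oB opens_pre /pre_opens; apply: eq_imset => V.
  rewrite (preI_im V gY); apply/setP => x.
  by rewrite !inE fg.
move/eqP => ->; apply/existsP; exists [ffun x => f x]; apply/and3P; split.
- by apply/forallP => i; apply/forallP => j; apply/implyP => lt; rewrite !ffunE hf.
- by rewrite -hY; apply/eqP; apply: eq_imset => x; rewrite ffunE.
apply/eqP; rewrite opens_pre /pre_opens; apply: eq_imset => V.
apply/setP => x; rewrite !inE ffunE.
by rewrite -hY imset_f ?inE ?andbT.
Qed.

Lemma std_card n m (T : topo n) Y (B : topo m) : is_std T Y B -> #|Y| = m.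
Proof.
case/existsP => g /and3P [/forallP hg /eqP gY _].
have hg' : incr g by move=> i j lt; have := forallP (hg i) j; rewrite lt.
rewrite -gY card_imset; first by rewrite cardsT card_ord.
exact: incr_inj.
Qed.

Lemma std_uniq n m (T : topo n) Y (B B' : topo m) : is_std T Y B -> is_std T Y B' -> B = B'.
Proof.
move=> h h'; have := std_card h => /incr_ex [f hf hY].
by move: h h'; rewrite !(std_iff _ _ hf hY) => /eqP -> /eqP ->.
Qed.


Lemma mobius (I : finType) (V : zmodType) (le : rel I) (mu : I -> nat)
  (lerefl : forall x, le x x) (hmu : forall x y, le x y -> x != y -> (mu x < mu y)%N)
  (G F : I -> V) :
  (forall y, \sum_(x | le x y) G x = \sum_(x | le x y) F x) -> forall y, G y = F y.
Proof.
move=> H.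
suff S : forall k y, (mu y < k)%N -> G y = F y by move=> y; apply: (S (mu y).+1).
elim=> [//|k IH] y; rewrite ltnS => hy.
have := H y; rewrite (bigD1 y) ?lerefl //= [in RHS](bigD1 y) ?lerefl //=.
rewrite (eq_bigr F) => [/addIr //|x /andP [lxy nxy]].
by apply: IH; apply: leq_trans (hmu _ _ lxy nxy) hy.
Qed.

Lemma refines_refl n (T : topo n) : refines T T.
Proof. exact: subxx. Qed.

Lemma refines_mu n (T T' : topo n) : refines T T' -> T != T' -> (#|opens T| < #|opens T'|)%N.
Proof.
move=> h ne; apply: proper_card; rewrite properEneq; apply/andP; split; last exact: h.
by apply: contra ne => /eqP E; apply/eqP/val_inj.
Qed.

Definition ind n (C : {set {set 'I_n}}) (K : fieldType) : Hdeg K n := [ffun X => (opens X == C)%:R].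

Section Ribbon.
Variable K : fieldType.
Variable R : forall n : nat, topo n -> Hdeg K n.
Hypothesis HR : forall (n : nat) (T : topo n),
          basis K T = \sum_(T' : topo n | refines T' T) R T'.

Lemma ind_basis n (C : {set {set 'I_n}}) (hC : is_topology C) :
  ind C K = \sum_(U : topo n | opens U \subset C) R U.
Proof.
pose X0 : topo n := exist _ C hC.
have -> : ind C K = basis K X0.
  by apply/ffunP => X; rewrite !ffunE; congr (_%:R).
by rewrite HR.
Qed.

Definition prodC k l (C : topo k -> topo l -> {set {set 'I_(k + l)}})
  (f : Hdeg K k) (g : Hdeg K l) : Hdeg K (k + l) :=
  [ffun X => \sum_(T : topo k) \sum_(T' : topo l)
              (opens X == C T T')%:R * f T * g T'].

Lemma prodC_sum k l C (I J : finType) (P : pred I) (Q : pred J) F G :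
  @prodC k l C (\sum_(i | P i) F i) (\sum_(j | Q j) G j) =
  \sum_(i | P i) \sum_(j | Q j) prodC C (F i) (G j).
Proof.
apply/ffunP => X; rewrite ffunE sum_ffunE.
under eq_bigr => T _ do under eq_bigr => T' _ do
  rewrite !sum_ffunE -mulrA big_distrlr mulr_sumr.
under [RHS]eq_bigr => i _ do rewrite sum_ffunE.
under [RHS]eq_bigr => i _ do under eq_bigr => j _ do rewrite ffunE.
under eq_bigr => T _ do rewrite exchange_big /=.
rewrite exchange_big /=; apply: eq_bigr => i _.
under eq_bigr => T _ do under eq_bigr => T' _ do rewrite mulr_sumr.
under eq_bigr => T _ do rewrite exchange_big /=.
rewrite exchange_big /=; apply: eq_bigr => j _.
by apply: eq_bigr => T _; apply: eq_bigr => T' _; rewrite mulrA.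
Qed.

Lemma prodC_basis k l C (T : topo k) (T' : topo l) :
  prodC C (basis K T) (basis K T') = ind (C T T') K.
Proof.
apply/ffunP => X; rewrite ffunE (bigD1 T) //= [X in _ + X]big1 => [|T0 ne]; last first.
  by apply: big1 => T0' _; rewrite !ffunE (negbTE ne) mulr0 mul0r.
rewrite addr0 (bigD1 T') //= [X in _ + X]big1 => [|T0' ne]; last by rewrite !ffunE (negbTE ne) mulr0.
by rewrite !ffunE !eqxx !mulr1 addr0.
Qed.

End Ribbon.


Lemma incr_lshift k l : incr (@lshift k l).
Proof. by move=> i j. Qed.

Lemma incr_rshift k l : incr (@rshift k l).
Proof. by move=> i j lt /=; rewrite ltn_add2l. Qed.

Lemma LorR k l (x : 'I_(k + l)) : (exists j, x = lshift l j) \/ (exists j, x = @rshift k l j).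
Proof.
case: (splitP x) => j E; [left | right]; exists j; exact: val_inj.
Qed.

Lemma im_lshift k l : lshift l @: setT = [set i : 'I_(k + l) | (i < k)%N].
Proof.
apply/setP => x; rewrite inE; apply/imsetP/idP => [[y _ ->]|h]; first exact: (ltn_ord y).
by exists (Ordinal h); rewrite ?inE //; apply: val_inj.
Qed.

Lemma im_rshift k l : @rshift k l @: setT = [set i : 'I_(k + l) | (k <= i)%N].
Proof.
apply/setP => x; rewrite inE; apply/imsetP/idP => [[y _ ->]|h]; first by rewrite /= leq_addr.
have h' : (x - k < l)%N by rewrite ltn_subLR // (ltn_ord x).
by exists (Ordinal h'); rewrite ?inE //; apply: val_inj; rewrite /= subnKC.
Qed.

Lemma L_in_L k l (j : 'I_k) (O : {set 'I_k}) : (lshift l j \in lshift l @: O) = (j \in O).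
Proof. by rewrite mem_imset //; apply: lshift_inj. Qed.

Lemma R_in_R k l (j : 'I_l) (O : {set 'I_l}) : (@rshift k l j \in @rshift k l @: O) = (j \in O).
Proof. by rewrite mem_imset //; apply: rshift_inj. Qed.

Lemma L_in_R k l (j : 'I_k) (O : {set 'I_l}) : (lshift l j \in @rshift k l @: O) = false.
Proof.
apply/imsetP => [[i _ /(congr1 val) /= E]]; have := ltn_ord j; rewrite E.
by rewrite ltnNge leq_addr.
Qed.

Lemma R_in_L k l (j : 'I_l) (O : {set 'I_k}) : (@rshift k l j \in lshift l @: O) = false.
Proof.
apply/imsetP => [[i _ /(congr1 val) /= E]]; have := ltn_ord i; rewrite -E.
by rewrite ltnNge leq_addr.
Qed.

Definition inLR := (L_in_L, R_in_R, L_in_R, R_in_L).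

Lemma preL_LR k l (O : {set 'I_k}) (O' : {set 'I_l}) :
  lshift l @^-1: (lshift l @: O :|: @rshift k l @: O') = O.
Proof. by apply/setP => x; rewrite !inE !inLR orbF. Qed.

Lemma preR_LR k l (O : {set 'I_k}) (O' : {set 'I_l}) :
  @rshift k l @^-1: (lshift l @: O :|: @rshift k l @: O') = O'.
Proof. by apply/setP => x; rewrite !inE !inLR. Qed.

Lemma LR_pre k l (V : {set 'I_(k + l)}) :
  V = lshift l @: (lshift l @^-1: V) :|: @rshift k l @: (@rshift k l @^-1: V).
Proof.
apply/setP => x; case: (LorR x) => [[j ->]|[j ->]]; rewrite !inE !inLR !inE ?orbF //.
Qed.

Lemma concat_char k l (T : topo k) (T' : topo l) :
  concat_opens T T' =
  [set V : {set 'I_(k + l)} | (lshift l @^-1: V \in opens T) && (@rshift k l @^-1: V \in opens T')].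
Proof.
apply/setP => V; rewrite inE; apply/imset2P/andP => [[O O' hO hO' ->]|[h1 h2]].
  by rewrite preL_LR preR_LR.
by exists (lshift l @^-1: V) (@rshift k l @^-1: V) => //; apply: LR_pre.
Qed.

Lemma down_char k l (T : topo k) (T' : topo l) :
  down_opens T T' =
  [set V : {set 'I_(k + l)} | [&& lshift l @^-1: V \in opens T, @rshift k l @^-1: V \in opens T' &
            (lshift l @^-1: V != set0) ==> (@rshift k l @^-1: V == setT)]].
Proof.
apply/setP => V; rewrite inE /down_opens inE.
apply/orP/and3P => [[/imsetP [O hO ->]|/imsetP [O' hO' ->]]|[h1 h2 h3]].
- by rewrite preL_LR preR_LR eqxx implybT; split => //; apply: topT.
- have -> : @rshift k l @: O' = lshift l @: set0 :|: @rshift k l @: O' by rewrite imset0 set0U.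
  by rewrite preL_LR preR_LR eqxx /=; split => //; apply: top0.
case: (lshift l @^-1: V =P set0) => [E|/eqP ne].
  right; apply/imsetP; exists (@rshift k l @^-1: V) => //.
  by rewrite {1}(LR_pre V) E imset0 set0U.
left; apply/imsetP; exists (lshift l @^-1: V) => //.
by move: h3; rewrite ne /= => /eqP E; rewrite {1}(LR_pre V) E.
Qed.

Lemma pre_sub n m (f : 'I_m -> 'I_n) (U : topo n) (T : topo m) :
  refines (pre f U) T = [forall V in opens U, f @^-1: V \in opens T].
Proof.
apply/subsetP/forall_inP => [H V hV|H W]; first by apply: H; apply: imset_f.
by rewrite opens_pre => /imsetP [V hV ->]; apply: H.
Qed.

Lemma sub_setP n (X : {set {set 'I_n}}) (P : pred {set 'I_n}) :
  (X \subset [set V | P V]) = [forall V in X, P V].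
Proof.
by apply/subsetP/forall_inP => H V hV; [have := H V hV; rewrite inE | rewrite inE; apply: H].
Qed.

Lemma forall_inA (T : finType) (X : {pred T}) (P Q : pred T) :
  [forall x in X, P x && Q x] = [forall x in X, P x] && [forall x in X, Q x].
Proof.
apply/forall_inP/andP => [H|[/forall_inP H1 /forall_inP H2] x hx].
  by split; apply/forall_inP => x /H /andP [].
by rewrite H1 ?H2.
Qed.

Lemma down_setle k l (U : topo (k + l)) :
  [forall V in opens U, (lshift l @^-1: V != set0) ==> (@rshift k l @^-1: V == setT)] =
  setle U [set i : 'I_(k + l) | (i < k)%N] [set i : 'I_(k + l) | (k <= i)%N].
Proof.
apply/forall_inP/forall_inP => [H i|H V hV].
  rewrite inE => hi; apply/forall_inP => j; rewrite inE => hj; apply/forall_inP => V hV.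
  apply/implyP => iV.
  have [i' Ei] : exists i', i = lshift l i'.
    by case: (LorR i) => [//|[i' Ei]]; move: hi; rewrite Ei /= ltnNge leq_addr.
  have [j' Ej] : exists j', j = @rshift k l j'.
    case: (LorR j) => [[j' Ej]|//]; move: hj; rewrite Ej /= leqNgt.
    by rewrite (ltn_ord j').
  have := H V hV; rewrite Ej; apply: contraLR => jV.
  rewrite negb_imply; apply/andP; split.
    by apply/set0Pn; exists i'; rewrite inE -Ei.
  apply/eqP => E; have : j' \in @rshift k l @^-1: V by rewrite E inE.
  by rewrite inE (negbTE jV).
apply/implyP => /set0Pn [i' hi']; apply/eqP/setP => j'; rewrite !inE.
have hi : lshift l i' \in [set i : 'I_(k + l) | (i < k)%N] by rewrite inE; exact: (ltn_ord i').
have hj : @rshift k l j' \in [set i : 'I_(k + l) | (k <= i)%N] by rewrite inE /= leq_addr.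
have := H _ hi => /forall_inP /(_ _ hj) /forall_inP /(_ V hV) /implyP; apply.
by move: hi'; rewrite inE.
Qed.


Lemma cond_UI (I J : finType) (X1 X2 : {set I}) (Y1 Y2 : {set J}) :
  (X1 != set0) ==> (Y1 == setT) -> (X2 != set0) ==> (Y2 == setT) ->
  ((X1 :|: X2 != set0) ==> (Y1 :|: Y2 == setT)) &&
  ((X1 :&: X2 != set0) ==> (Y1 :&: Y2 == setT)).
Proof.
move=> /implyP h1 /implyP h2; apply/andP; split; apply/implyP => ne.
  case: (X1 =P set0) => [e1|/eqP n1].
    by move: ne; rewrite e1 set0U => /h2 /eqP ->; rewrite setUT.
  by move: (h1 n1) => /eqP ->; rewrite setTU.
case: (X1 =P set0) => [e1|/eqP n1]; first by move: ne; rewrite e1 set0I eqxx.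
case: (X2 =P set0) => [e2|/eqP n2]; first by move: ne; rewrite e2 setI0 eqxx.
by move: (h1 n1) (h2 n2) => /eqP -> /eqP ->; rewrite setIT.
Qed.

Section Prod.
Variable K : fieldType.
Variable R : forall n : nat, topo n -> Hdeg K n.
Hypothesis HR : forall (n : nat) (T : topo n),
          basis K T = \sum_(T' : topo n | refines T' T) R T'.

Lemma prod_ribbon k l (C : topo k -> topo l -> {set {set 'I_(k + l)}}) (Q : pred (topo (k + l)))
  (Ctop : forall T T', is_topology (C T T'))
  (Cchar : forall T T' (U : topo (k + l)), (opens U \subset C T T') =
     [&& refines (pre (@lshift k l) U) T, refines (pre (@rshift k l) U) T' & Q U])
  (T : topo k) (T' : topo l) :
  prodC C (R T) (R T') =
  \sum_(U : topo (k + l) | [&& is_std U [set i : 'I_(k + l) | (i < k)%N] T,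
                              is_std U [set i : 'I_(k + l) | (k <= i)%N] T' & Q U]) R U.
Proof.
pose le (p q : topo k * topo l) := refines p.1 q.1 && refines p.2 q.2.
pose mu (p : topo k * topo l) := (#|opens p.1| + #|opens p.2|)%N.
pose G (p : topo k * topo l) := prodC C (R p.1) (R p.2).
pose F (p : topo k * topo l) := \sum_(U : topo (k + l) | [&& is_std U [set i : 'I_(k + l) | (i < k)%N] p.1,
                              is_std U [set i : 'I_(k + l) | (k <= i)%N] p.2 & Q U]) R U.
apply: (@mobius _ _ le mu _ _ G F _ (T, T')).
- by move=> p; rewrite /le !refines_refl.
- move=> [S S'] [T0 T0'] /andP [/= h1 h2]; rewrite xpair_eqE negb_and /mu /=.
  have l1 := subset_leq_card h1; have l2 := subset_leq_card h2.
  case/orP => ne.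
    by have := leq_add (refines_mu h1 ne) l2; rewrite addSn.
  by have := leq_add l1 (refines_mu h2 ne); rewrite addnS.
move=> [T1 T1'].
transitivity (\sum_(S | refines S T1) \sum_(S' | refines S' T1') prodC C (R S) (R S')).
  by rewrite pair_big_dep.
rewrite -prodC_sum -!HR prodC_basis (ind_basis HR) //.
symmetry; rewrite /F (exchange_big_dep predT) //=.
rewrite [RHS]big_mkcond; apply: eq_bigr => U _.
set p0 := (pre (@lshift k l) U, pre (@rshift k l) U).
have hP : forall p : topo k * topo l,
  le p (T1, T1') && [&& is_std U [set i : 'I_(k + l) | (i < k)%N] p.1,
     is_std U [set i : 'I_(k + l) | (k <= i)%N] p.2 & Q U] =
  (p == p0) && (le p0 (T1, T1') && Q U).
  move=> [S S'] /=.
  rewrite (std_iff _ _ (@incr_lshift k l) (@im_lshift k l)).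
  rewrite (std_iff _ _ (@incr_rshift k l) (@im_rshift k l)).
  rewrite /p0 xpair_eqE.
  case: (S =P pre (@lshift k l) U) => [->|_]; case: (S' =P pre (@rshift k l) U) => [->|_];
    rewrite /le /= ?andbF ?andbT ?andFb ?eqxx ?andbA //.
have E : le p0 (T1, T1') && Q U = (opens U \subset C T1 T1') by rewrite Cchar andbA.
rewrite (eq_bigl _ _ hP) E; case: ifP => h.
  by apply: big_pred1 => p; rewrite /= ?h andbT.
by apply: big_pred0 => p; rewrite ?h andbF.
Qed.

Lemma part1 k l (T : topo k) (T' : topo l) :
  mulH (R T) (R T') =
  \sum_(T'' : topo (k + l) | is_std T'' [set i : 'I_(k + l) | (i < k)%N] T
                             && is_std T'' [set i : 'I_(k + l) | (k <= i)%N] T') R T''.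
Proof.
have -> : mulH (R T) (R T') = prodC (@concat_opens k l) (R T) (R T') by [].
rewrite (@prod_ribbon k l _ predT) => [|T0 T0'|T0 T0' U].
- by apply: eq_bigl => U; rewrite andbT.
- rewrite concat_char; apply: topP; rewrite ?inE ?preimset0 ?preimsetT ?top0 ?topT //.
  move=> A B; rewrite !inE => /andP [a1 a2] /andP [b1 b2].
  by rewrite !preimsetU !preimsetI !topU ?topI.
rewrite concat_char sub_setP forall_inA !pre_sub andbT //.
Qed.

Lemma part2 k l (T : topo k) (T' : topo l) :
  downH (R T) (R T') =
  \sum_(T'' : topo (k + l) | [&& is_std T'' [set i : 'I_(k + l) | (i < k)%N] T,
                                is_std T'' [set i : 'I_(k + l) | (k <= i)%N] T' &
                                setle T'' [set i : 'I_(k + l) | (i < k)%N]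
                                          [set i : 'I_(k + l) | (k <= i)%N]])
     R T''.
Proof.
have -> : downH (R T) (R T') = prodC (@down_opens k l) (R T) (R T') by [].
rewrite (@prod_ribbon k l _ (fun U => setle U [set i : 'I_(k + l) | (i < k)%N]
                                          [set i : 'I_(k + l) | (k <= i)%N])) => // [T0 T0'|T0 T0' U].
- rewrite down_char; apply: topP; rewrite ?inE ?preimset0 ?preimsetT ?top0 ?topT ?eqxx ?implybT //.
  move=> A B; rewrite !inE => /and3P [a1 a2 a3] /and3P [b1 b2 b3].
  rewrite !preimsetU !preimsetI !topU ?topI //=.
  exact: cond_UI.
rewrite down_char sub_setP !forall_inA !pre_sub -down_setle //.
Qed.

End Prod.


Lemma setlt_cond n (S : topo n) (O : {set 'I_n}) :
  setlt S (~: O) O -> forall V, V \in opens S -> (V :&: ~: O != set0) ==> (O \subset V).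
Proof.
move=> /forall_inP H V hV; apply/implyP => /set0Pn [z]; rewrite !inE => /andP [zV zO].
apply/subsetP => y yO.
have zO' : z \in ~: O by rewrite inE.
have /forall_inP /(_ y yO) /andP [/forall_inP /(_ V hV) /implyP h _] := H z zO'.
exact: h.
Qed.

Lemma cond_setlt n (S : topo n) (O : {set 'I_n}) :
  O \in opens S -> (forall V, V \in opens S -> (V :&: ~: O != set0) ==> (O \subset V)) ->
  setlt S (~: O) O.
Proof.
move=> hO H; apply/forall_inP => z; rewrite inE => zO; apply/forall_inP => y yO.
apply/andP; split.
  apply/forall_inP => V hV; apply/implyP => zV.
  have /implyP h := H V hV.
  have /subsetP : O \subset V by apply: h; apply/set0Pn; exists z; rewrite !inE zV.
  by apply.
apply/negP; rewrite /tle => /forall_inP /(_ O hO) /implyP /(_ yO).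
by rewrite (negbTE zO).
Qed.

Section Glue.
Variables (n i j : nat) (O : {set 'I_n}) (f1 : 'I_i -> 'I_n) (f2 : 'I_j -> 'I_n).
Hypotheses (hf1 : incr f1) (im1 : f1 @: setT = ~: O) (hf2 : incr f2) (im2 : f2 @: setT = O).

Lemma f1O x : (f1 x \in O) = false.
Proof. have : f1 x \in ~: O by rewrite -im1 imset_f. by rewrite inE => /negbTE. Qed.

Lemma f2O y : (f2 y \in O) = true.
Proof. by rewrite -im2 imset_f. Qed.

Lemma f1_in x (a : {set 'I_i}) : (f1 x \in f1 @: a) = (x \in a).
Proof. by rewrite mem_imset //; apply: incr_inj. Qed.

Lemma f2_in y (b : {set 'I_j}) : (f2 y \in f2 @: b) = (y \in b).
Proof. by rewrite mem_imset //; apply: incr_inj. Qed.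

Lemma f2_in1 y (a : {set 'I_i}) : (f2 y \in f1 @: a) = false.
Proof.
apply/imsetP => [[x _ E]]; by have := f2O y; rewrite E f1O.
Qed.

Lemma f1_in2 x (b : {set 'I_j}) : (f1 x \in f2 @: b) = false.
Proof.
apply/imsetP => [[y _ E]]; by have := f2O y; rewrite -E f1O.
Qed.

Lemma cover12 (z : 'I_n) : (exists x, z = f1 x) \/ (exists y, z = f2 y).
Proof.
case: (boolP (z \in O)) => zO.
  by right; move: zO; rewrite -im2 => /imsetP [y _ ->]; exists y.
have : z \in ~: O by rewrite inE.
by rewrite -im1 => /imsetP [x _ ->]; left; exists x.
Qed.

Definition glue_opens (A : topo i) (B : topo j) : {set {set 'I_n}} :=
  [set V : {set 'I_n} | [&& f1 @^-1: V \in opens A, f2 @^-1: V \in opens B &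
                           (V :&: ~: O != set0) ==> (O \subset V)]].

Lemma glue_top A B : is_topology (glue_opens A B).
Proof.
apply: topP; rewrite ?inE ?preimset0 ?preimsetT ?top0 ?topT ?set0I ?eqxx ?subsetT ?implybT //.
move=> V W; rewrite !inE => /and3P [a1 a2 /implyP a3] /and3P [b1 b2 /implyP b3].
rewrite !preimsetU !preimsetI !topU ?topI //=; apply/andP; split; apply/implyP.
  rewrite setIUl => /set0Pn [z]; rewrite inE => /orP [zV|zW].
    by apply: subset_trans (subsetUl _ _); apply: a3; apply/set0Pn; exists z.
  by apply: subset_trans (subsetUr _ _); apply: b3; apply/set0Pn; exists z.
move=> /set0Pn [z]; rewrite !inE => /andP [/andP [zV zW] zO].
rewrite subsetI a3 ?b3 //; apply/set0Pn; exists z; by rewrite !inE ?zV ?zW.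
Qed.

Definition glue (A : topo i) (B : topo j) : topo n := exist _ (glue_opens A B) (glue_top A B).

Lemma glue_in (U : topo n) (hO : O \in opens U) (V W1 W2 : {set 'I_n}) :
  W1 \in opens U -> W2 \in opens U ->
  f1 @^-1: V = f1 @^-1: W1 -> f2 @^-1: V = f2 @^-1: W2 ->
  (V :&: ~: O != set0) ==> (O \subset V) -> V \in opens U.
Proof.
move=> hW1 hW2 e1 e2 /implyP c.
have e1' x : (f1 x \in V) = (f1 x \in W1) by move/setP: e1 => /(_ x); rewrite !inE.
have e2' y : (f2 y \in V) = (f2 y \in W2) by move/setP: e2 => /(_ y); rewrite !inE.
case: (V :&: ~: O =P set0) => [E|/eqP ne].
  have -> : V = W2 :&: O; last exact: topI.
  apply/setP => z; case: (cover12 z) => [[x ->]|[y ->]]; rewrite inE ?f1O ?f2O ?andbF ?andbT.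
    apply/negP => h; have : f1 x \in V :&: ~: O by rewrite !inE h f1O.
    by rewrite E inE.
  by rewrite e2'.
have sub := c ne.
have -> : V = W1 :|: O; last exact: topU.
apply/setP => z; case: (cover12 z) => [[x ->]|[y ->]]; rewrite inE ?f1O ?f2O ?orbF ?orbT.
  by rewrite e1'.
by apply: (subsetP sub); rewrite f2O.
Qed.

Lemma pre1_glue A B : pre f1 (glue A B) = A.
Proof.
apply: topo_eq; rewrite opens_pre; apply/setP => a; apply/imsetP/idP.
  by move=> [V]; rewrite inE => /and3P [h _ _] ->.
move=> ha; exists (f1 @: a :|: (if a == set0 then set0 else O)).
  rewrite inE; apply/and3P; split.
  - have -> : f1 @^-1: (f1 @: a :|: (if a == set0 then set0 else O)) = a; last by [].
    by apply/setP => x; rewrite !inE f1_in; case: ifP; rewrite ?inE ?f1O ?orbF.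
  - case: ifP => _.
      have -> : f2 @^-1: (f1 @: a :|: set0) = set0; last exact: top0.
      by apply/setP => y; rewrite !inE f2_in1.
    have -> : f2 @^-1: (f1 @: a :|: O) = setT; last exact: topT.
    by apply/setP => y; rewrite !inE f2O orbT.
  - case: ifP => [/eqP ->|_]; last by rewrite subsetUr implybT.
    rewrite imset0 setU0 set0I eqxx //.
by apply/setP => x; rewrite !inE f1_in; case: ifP; rewrite ?inE ?f1O ?orbF.
Qed.

Lemma pre2_glue A B : pre f2 (glue A B) = B.
Proof.
apply: topo_eq; rewrite opens_pre; apply/setP => b; apply/imsetP/idP.
  by move=> [V]; rewrite inE => /and3P [_ h _] ->.
move=> hb; exists (f2 @: b).
  rewrite inE; apply/and3P; split.
  - have -> : f1 @^-1: (f2 @: b) = set0; last exact: top0.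
    by apply/setP => x; rewrite !inE f1_in2.
  - have -> : f2 @^-1: (f2 @: b) = b; last by [].
    by apply/setP => y; rewrite !inE f2_in.
  - apply/implyP => /set0Pn [z]; rewrite !inE => /andP [/imsetP [y _ ->]].
    by rewrite f2O.
by apply/setP => y; rewrite !inE f2_in.
Qed.

Lemma glue_O A B : O \in opens (glue A B).
Proof.
rewrite /= inE; apply/and3P; split.
- have -> : f1 @^-1: O = set0; last exact: top0.
  by apply/setP => x; rewrite !inE f1O.
- have -> : f2 @^-1: O = setT; last exact: topT.
  by apply/setP => y; rewrite !inE f2O.
by rewrite subxx implybT.
Qed.

Lemma glue_setlt A B : setlt (glue A B) (~: O) O.
Proof.
apply: cond_setlt; first exact: glue_O.
by move=> V; rewrite /= inE => /and3P [].
Qed.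

Lemma glue_refines (T : topo n) A B : O \in opens T ->
  refines A (pre f1 T) -> refines B (pre f2 T) -> refines (glue A B) T.
Proof.
move=> hO /subsetP hA /subsetP hB; apply/subsetP => V; rewrite /= inE => /and3P [h1 h2 h3].
have /imsetP [W1 hW1 e1] := hA _ h1.
have /imsetP [W2 hW2 e2] := hB _ h2.
exact: (glue_in hO hW1 hW2 e1 e2 h3).
Qed.

Lemma glue_pre (S : topo n) : O \in opens S -> setlt S (~: O) O ->
  glue (pre f1 S) (pre f2 S) = S.
Proof.
move=> hO hlt; apply: topo_eq; apply/setP => V; apply/idP/idP.
  rewrite /= inE => /and3P [/imsetP [W1 hW1 e1] /imsetP [W2 hW2 e2] h3].
  exact: (glue_in hO hW1 hW2 e1 e2 h3).
move=> hV; rewrite /= inE; apply/and3P; split; try exact: imset_f.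
exact: setlt_cond hlt V hV.
Qed.

End Glue.


Lemma pre_mono n m (f : 'I_m -> 'I_n) (S T : topo n) : refines S T -> refines (pre f S) (pre f T).
Proof.
move=> r; apply/subsetP => a; rewrite opens_pre => /imsetP [V hV ->].
by rewrite opens_pre; apply: imset_f; exact: (subsetP r).
Qed.

Lemma std_none n m (T : topo n) (Y : {set 'I_n}) (A : topo m) : #|Y| != m -> is_std T Y A = false.
Proof. by move=> c; apply/negbTE/negP => /std_card h; rewrite h eqxx in c. Qed.

Section Coprod.
Variable K : fieldType.
Variable R : forall n : nat, topo n -> Hdeg K n.
Hypothesis HR : forall (n : nat) (T : topo n),
          basis K T = \sum_(T' : topo n | refines T' T) R T'.

Lemma coprod_sum n (I : finType) (P : pred I) (F : I -> Hdeg K n) i j :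
  coprodH (\sum_(x | P x) F x) i j = \sum_(x | P x) coprodH (F x) i j.
Proof.
apply/ffunP => AB; rewrite ffunE sum_ffunE.
under eq_bigr => T _ do rewrite sum_ffunE mulr_suml.
rewrite exchange_big /=; apply: eq_bigr => x _.
by rewrite ffunE.
Qed.

Lemma tensH_sum i j (I J : finType) (P : pred I) (Q : pred J) (F : I -> Hdeg K i) (G : J -> Hdeg K j) :
  tensH (\sum_(x | P x) F x) (\sum_(y | Q y) G y) = \sum_(x | P x) \sum_(y | Q y) tensH (F x) (G y).
Proof.
apply/ffunP => AB; rewrite ffunE !sum_ffunE big_distrlr /=.
apply: eq_bigr => x _; rewrite sum_ffunE; apply: eq_bigr => y _.
by rewrite ffunE.
Qed.

Lemma sum_basis_std n m (T : topo n) (Y : {set 'I_n}) (a : topo m) :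
  \sum_(A : topo m | is_std T Y A) (basis K A) a = (is_std T Y a)%:R.
Proof.
case h: (is_std T Y a).
  rewrite (bigD1 a) //= big1 => [|A /andP [hA ne]]; first by rewrite ffunE eqxx addr0.
  by rewrite ffunE eq_sym (negbTE ne).
apply: big1 => A hA; rewrite ffunE.
case: eqP => // e; by rewrite e hA in h.
Qed.

Lemma coprod_basis n (T : topo n) i j :
  coprodH (basis K T) i j =
  \sum_(O in opens T) \sum_(A : topo i | is_std T (~: O) A) \sum_(B : topo j | is_std T O B)
     tensH (basis K A) (basis K B).
Proof.
apply/ffunP => [[a b]]; rewrite ffunE /=.
rewrite (bigD1 T) //= big1 => [|T0 ne]; last by rewrite ffunE (negbTE ne) mul0r.
rewrite ffunE eqxx mul1r addr0 sum_ffunE.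
transitivity (\sum_(O in opens T) (is_std T (~: O) a)%:R * (is_std T O b)%:R :> K).
  rewrite -sumr_const big_mkcond [RHS]big_mkcond; apply: eq_bigr => O _.
  by rewrite inE; case: (O \in opens T); case: (is_std T (~: O) a); case: (is_std T O b);
     rewrite /= ?mulr1 ?mulr0.
apply: eq_bigr => O _.
rewrite -(sum_basis_std T (~: O) a) -(sum_basis_std T O b) big_distrlr sum_ffunE /=.
apply: eq_bigr => A _; rewrite sum_ffunE; apply: eq_bigr => B _.
by rewrite [RHS]ffunE.
Qed.

Lemma part3 n (T : topo n) (i j : nat) :
  coprodH (R T) i j =
  \sum_(O in opens T | setlt T (~: O) O)
     \sum_(A : topo i | is_std T (~: O) A)
       \sum_(B : topo j | is_std T O B)
         tensH (R A) (R B).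
Proof.
pose G (T : topo n) := coprodH (R T) i j.
pose F (T : topo n) := \sum_(O in opens T | setlt T (~: O) O)
     \sum_(A : topo i | is_std T (~: O) A) \sum_(B : topo j | is_std T O B) tensH (R A) (R B).
apply: (@mobius _ _ (@refines n) (fun T => #|opens T|) (@refines_refl n) (@refines_mu n) G F _ T).
move=> T1.
rewrite /G /F /= -coprod_sum -HR coprod_basis.
rewrite (exchange_big_dep (fun O => O \in opens T1)) /= => [|S O hS /andP [hO _]]; last exact: (subsetP hS).
apply: eq_bigr => O hO.
transitivity (\sum_(A : topo i | is_std T1 (~: O) A) \sum_(B : topo j | is_std T1 O B)
   \sum_(A' : topo i | refines A' A) \sum_(B' : topo j | refines B' B) tensH (R A') (R B')).
  by apply: eq_bigr => A _; apply: eq_bigr => B _; rewrite (HR A) (HR B) tensH_sum.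
case: (boolP (#|~: O| == i)) => [/eqP c1|c1]; last first.
  rewrite [LHS]big_pred0 => [|A]; last by apply: std_none.
  rewrite [RHS]big1 // => S _; rewrite big_pred0 // => A.
  by apply: std_none.
case: (boolP (#|O| == j)) => [/eqP c2|c2]; last first.
  rewrite [LHS]big1 => [|A _]; last first.
    by rewrite big_pred0 // => B; apply: std_none.
  rewrite [RHS]big1 // => S _; rewrite big1 // => A _; rewrite big_pred0 // => B.
  by apply: std_none.
have [f1 hf1 im1] := incr_ex c1.
have [f2 hf2 im2] := incr_ex c2.
rewrite [LHS](big_pred1 (pre f1 T1)) => [|A]; last by rewrite (std_iff _ _ hf1 im1).
rewrite [LHS](big_pred1 (pre f2 T1)) => [|B]; last by rewrite (std_iff _ _ hf2 im2).
transitivity (\sum_(S | refines S T1 && ((O \in opens S) && setlt S (~: O) O))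
                 tensH (R (pre f1 S)) (R (pre f2 S))); last first.
  apply: eq_bigr => S _.
  rewrite (big_pred1 (pre f1 S)) => [|A]; last by rewrite (std_iff _ _ hf1 im1).
  rewrite (big_pred1 (pre f2 S)) => [//|B]; by rewrite (std_iff _ _ hf2 im2).
rewrite pair_big_dep /=.
rewrite (reindex_onto (fun S => (pre f1 S, pre f2 S)) (fun p => glue O f1 f2 p.1 p.2)) => [|[A' B'] _]; last first.
  by rewrite /= (@pre1_glue _ _ _ _ f1 f2 hf1 im1 im2) (@pre2_glue _ _ _ _ f1 f2 im1 hf2 im2).
apply: eq_bigl => S /=; apply/idP/idP.
  move=> /andP [/andP [r1 r2] /eqP E]; rewrite -E.
  rewrite (@glue_refines _ _ _ _ f1 f2 im1 im2) //.
  by rewrite (@glue_O _ _ _ _ f1 f2 im1 im2) (@glue_setlt _ _ _ _ f1 f2 im1 im2).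
move=> /and3P [r hO' hlt].
by rewrite (@glue_pre _ _ _ _ f1 f2 im1 im2) // eqxx andbT !pre_mono.
Qed.

End Coprod.

End Helpers.
Import Helpers.

Theorem theorem12 (K : fieldType)
  (R : forall n : nat, topo n -> Hdeg K n)
  (HR : forall (n : nat) (T : topo n),
          basis K T = \sum_(T' : topo n | refines T' T) R n T') :
  (forall (k l : nat) (T : topo k) (T' : topo l),
     mulH (R k T) (R l T') =
     \sum_(T'' : topo (k + l) | is_std T'' [set i : 'I_(k + l) | (i < k)%N] T
                                && is_std T'' [set i : 'I_(k + l) | (k <= i)%N] T')
        R (k + l) T'')
  /\
  (forall (k l : nat) (T : topo k) (T' : topo l),
     downH (R k T) (R l T') =
     \sum_(T'' : topo (k + l) | [&& is_std T'' [set i : 'I_(k + l) | (i < k)%N] T,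
                                   is_std T'' [set i : 'I_(k + l) | (k <= i)%N] T' &
                                   setle T'' [set i : 'I_(k + l) | (i < k)%N]
                                             [set i : 'I_(k + l) | (k <= i)%N]])
        R (k + l) T'')
  /\
  (forall (n : nat) (T : topo n) (i j : nat),
     coprodH (R n T) i j =
     \sum_(O in opens T | setlt T (~: O) O)
        \sum_(A : topo i | is_std T (~: O) A)
          \sum_(B : topo j | is_std T O B)
            tensH (R i A) (R j B)).
Proof.
split; first by move=> k l T T'; apply: (@part1 K R HR).
split; first by move=> k l T T'; apply: (@part2 K R HR).
by move=> n T i j; apply: (@part3 K R HR).
Qed.
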